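(* Let $A\in P(n)$ and $B\in P(m)$, and let $A\otimes B\in P(nm)$ be the Kronecker product, i.e. the block matrix whose $(i,j)$ block is $A_{ij}B$. Then $I(A\otimes B)=I(A)\,I(B)$.
   Context: $P(k)$ denotes the positive semidefinite complex $k\times k$ matrices. For $C\in P(k)$, let $P_k$ be the $k\times k$ matrix with all entries equal to $1$; the minimal index is $I(C)=\max\{\lambda\ge 0: C-\lambda P_k\ge 0\}$. *)

(* Defs.v *)
From HB Require Import structures.
From mathcomp Require Import all_boot all_order all_algebra.
From mathcomp Require Import reals.
From mathcomp.real_closed Require Import complex mxtens.

Set Implicit Arguments.
Unset Strict Implicit.
Unset Printing Implicit Defensive.

Import Order.TTheory GRing.Theory Num.Theory.
Local Open Scope ring_scope.

Definition adjmx {C : numClosedFieldType} {m n} (A : 'M[C]_(m, n)) : 'M[C]_(n, m) :=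
  map_mx Num.conj (A^T).

Definition psdmx {C : numClosedFieldType} {k} (A : 'M[C]_k) : Prop :=
  adjmx A = A /\ forall v : 'rV[C]_k, 0 <= (v *m A *m adjmx v) 0 0.

Definition onesmx {C : numClosedFieldType} (k : nat) : 'M[C]_k := const_mx 1.

(* I(A) = max {lambda >= 0 : A - lambda P_k >= 0}; relational form:
   [is_min_index A l] says that l is this maximum. *)
Definition is_min_index {R : realType} {k} (A : 'M[R[i]]_k) (l : R) : Prop :=
  [/\ 0 <= l,
      psdmx (A - (l%:C)%C *: onesmx k)
    & forall mu : R, 0 <= mu -> psdmx (A - (mu%:C)%C *: onesmx k) -> mu <= l].

(* Main.v *)
Require Import Defs.
From HB Require Import structures.
From mathcomp Require Import all_boot all_order all_algebra.
From mathcomp Require Import reals.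
From mathcomp.real_closed Require Import complex mxtens.
From mathcomp Require Import sesquilinear spectral.
From mathcomp Require Import ring lra.
From Stdlib Require Import Classical.

Import Order.TTheory GRing.Theory Num.Theory.
Local Open Scope ring_scope.

Section Gen.
Variable C : numClosedFieldType.

Definition qf {k} (A : 'M[C]_k) (v : 'rV[C]_k) := (v *m A *m adjmx v) 0 0.

Lemma adjmx_mul m n p (A : 'M[C]_(m, n)) (B : 'M[C]_(n, p)) :
  adjmx (A *m B) = adjmx B *m adjmx A.
Proof. by rewrite /adjmx trmx_mul map_mxM. Qed.

Lemma adjmxK m n (A : 'M[C]_(m, n)) : adjmx (adjmx A) = A.
Proof. by apply/matrixP => i j; rewrite !mxE conjCK. Qed.

Lemma adjmxD m n (A B : 'M[C]_(m, n)) : adjmx (A + B) = adjmx A + adjmx B.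
Proof. by apply/matrixP => i j; rewrite !mxE rmorphD. Qed.

Lemma adjmxB m n (A B : 'M[C]_(m, n)) : adjmx (A - B) = adjmx A - adjmx B.
Proof. by apply/matrixP => i j; rewrite !mxE rmorphB. Qed.

Lemma adjmxZ m n c (A : 'M[C]_(m, n)) : adjmx (c *: A) = c^* *: adjmx A.
Proof. by apply/matrixP => i j; rewrite !mxE rmorphM. Qed.

Lemma dot_ge0 n (w : 'rV[C]_n) : 0 <= (w *m adjmx w) 0 0.
Proof.
rewrite mxE; apply: sumr_ge0 => i _; rewrite !mxE; exact: mul_conjC_ge0.
Qed.

Lemma qf_gram p k (L : 'M[C]_(p, k)) v :
  qf (adjmx L *m L) v = ((v *m adjmx L) *m adjmx (v *m adjmx L)) 0 0.
Proof. by rewrite /qf adjmx_mul adjmxK !mulmxA. Qed.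

Lemma psd_gram p k (L : 'M[C]_(p, k)) : psdmx (adjmx L *m L).
Proof.
split; first by rewrite adjmx_mul adjmxK.
by move=> v; rewrite -/(qf _ v) qf_gram dot_ge0.
Qed.

Lemma adjmx_tens m n p q (A : 'M[C]_(m, n)) (B : 'M[C]_(p, q)) :
  adjmx (A *t B) = adjmx A *t adjmx B.
Proof. by rewrite /adjmx trmx_tens (map_mxT Num.Def.conjC). Qed.

Lemma psd_tens_gram m n (L : 'M[C]_m) (M : 'M[C]_n) :
  (adjmx L *m L) *t (adjmx M *m M) = adjmx (L *t M) *m (L *t M).
Proof. by rewrite adjmx_tens tensmx_mul. Qed.

Lemma psd_decomp k (A : 'M[C]_k) : psdmx A -> exists L : 'M[C]_k, A = adjmx L *m L.
Proof.
move=> [hA psdA].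
have N : A \is normalmx by apply/normalmxP; rewrite -[(A ^t* )%sesqui]/(adjmx A) hA.
move/orthomx_spectralP: N.
set P := spectralmx A; set d := spectral_diag A => eA.
have PU : P \is unitarymx by exact: spectral_unitarymx.
have iP : invmx P = adjmx P by rewrite invmx_unitary.
have PP : P *m adjmx P = 1%:M by apply/unitarymxP.
have dge0 : forall i, 0 <= d 0 i.
  move=> i; have := psdA ('e_i *m P).
  rewrite eA iP adjmx_mul !mulmxA -(mulmxA _ P) PP mulmx1.
  rewrite -(mulmxA _ P) PP mulmx1 -rowE row_diag_mx -scalemxAl.
  have -> : adjmx (delta_mx 0 i : 'rV[C]_k) = delta_mx i 0.
    by apply/matrixP => a b; rewrite !mxE rmorph_nat andbC.
  by rewrite mul_delta_mx mxE mxE eqxx mulr1.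
set s := \row_j sqrtC (d 0 j).
have As : adjmx (diag_mx s) = diag_mx s.
  have hc (x : C) : 0 <= x -> Num.conj x = x := fun h => geC0_conj h.
  apply/matrixP => a b; rewrite !mxE hc ?mulrn_wge0 ?sqrtC_ge0 // eq_sym.
  by case: eqP => [->|].
exists (diag_mx s *m P).
rewrite adjmx_mul As !mulmxA -(mulmxA (adjmx P)) mulmx_diag {1}eA iP.
congr (_ *m diag_mx _ *m _); apply/rowP => j; rewrite !mxE -expr2 sqrtCK //.
Qed.

Lemma psd_tens m n (A : 'M[C]_m) (B : 'M[C]_n) :
  psdmx A -> psdmx B -> psdmx (A *t B).
Proof.
move=> /psd_decomp [L ->] /psd_decomp [M ->].
rewrite psd_tens_gram; exact: psd_gram.
Qed.

Lemma qfD k (A B : 'M[C]_k) v : qf (A + B) v = qf A v + qf B v.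
Proof. by rewrite /qf mulmxDr mulmxDl mxE. Qed.

Lemma qfZ k c (A : 'M[C]_k) v : qf (c *: A) v = c * qf A v.
Proof. by rewrite /qf -scalemxAr -scalemxAl mxE. Qed.

Lemma qfB k c (A B : 'M[C]_k) v : qf (A - c *: B) v = qf A v - c * qf B v.
Proof. by rewrite -scaleNr qfD qfZ mulNr. Qed.

Lemma psd_add k (A B : 'M[C]_k) : psdmx A -> psdmx B -> psdmx (A + B).
Proof.
move=> [hA pA] [hB pB]; split; first by rewrite adjmxD hA hB.
move=> v; rewrite -/(qf _ v) qfD; exact: addr_ge0 (pA v) (pB v).
Qed.

Lemma psd_scale k c (A : 'M[C]_k) : 0 <= c -> psdmx A -> psdmx (c *: A).
Proof.
move=> c0 [hA pA]; split; first by rewrite adjmxZ hA geC0_conj.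
move=> v; rewrite -/(qf _ v) qfZ; exact: mulr_ge0 c0 (pA v).
Qed.

Lemma onesmx_gram k : onesmx k = adjmx (const_mx 1 : 'rV[C]_k) *m const_mx 1.
Proof.
apply/matrixP => i j; rewrite !mxE big_ord1 !mxE rmorph1 mulr1 //.
Qed.

Lemma psd_ones k : psdmx (onesmx k : 'M[C]_k).
Proof. rewrite onesmx_gram; exact: psd_gram. Qed.

Lemma ones_tens n m : (onesmx n : 'M[C]_n) *t onesmx m = onesmx (n * m).
Proof. by apply/matrixP => i j; rewrite !mxE mulr1. Qed.

Lemma qf_tens n m (A : 'M[C]_n) (B : 'M[C]_m) (x : 'rV[C]_n) (y : 'rV[C]_m) :
  qf (A *t B) (x *t y) = qf A x * qf B y.
Proof.
have e : (x *t y) *m (A *t B) *m adjmx (x *t y) =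
         (x *m A *m adjmx x) *t (y *m B *m adjmx y).
  by rewrite adjmx_tens !tensmx_mul.
transitivity (((x *m A *m adjmx x) *t (y *m B *m adjmx y)) 0 0).
  exact: (congr1 (fun M : 'M_(1*1,1*1) => M 0 0) e).
rewrite mxE; set u := mxtens_unindex _.
by case: u => i j; rewrite /qf (ord1 i) (ord1 j).
Qed.

End Gen.
Arguments qf {C k} A v.

Lemma infeas (R : realType) k (A : 'M[R[i]]_k) a c :
  psdmx A -> is_min_index A a -> a < c ->
  exists x, qf A x < c%:C%C * qf (onesmx k) x.
Proof.
move=> pA [a0 _ maxA] ac.
have c0 : 0 <= c by exact: le_trans a0 (ltW ac).
have c0C : 0 <= c%:C%C :> R[i] by rewrite ler0c.
have nP : ~ psdmx (A - c%:C%C *: onesmx k).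
  by move=> /(maxA c c0); rewrite leNgt ac.
have herm : adjmx (A - c%:C%C *: onesmx k) = A - c%:C%C *: onesmx k.
  by rewrite adjmxB adjmxZ (geC0_conj c0C) pA.1 (psd_ones _ k).1.
have [x hx] : exists x, ~ (0 <= qf (A - c%:C%C *: onesmx k) x).
  apply: not_all_ex_not => H; apply: nP; split => // v; exact: H.
exists x; move: hx; rewrite qfB subr_ge0.
have r1 : qf A x \is Num.real by apply: ger0_real; exact: pA.2.
have r2 : c%:C%C * qf (onesmx k) x \is Num.real.
  by apply: ger0_real; apply: mulr_ge0 => //; exact: (psd_ones _ k).2.
by rewrite (real_ltNge r1 r2) => /negP.
Qed.

Lemma eps_exists (R : realType) (a b mu : R) : 0 <= a -> 0 <= b -> a * b < mu ->
  exists e, 0 < e /\ (a + e) * (b + e) < mu.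
Proof.
move=> a0 b0 lt; set d := mu - a * b.
have d0 : 0 < d by rewrite subr_gt0.
set t := a + b + d + 1.
have t0 : 0 < t by rewrite /t; lra.
exists (d / t); split; first exact: divr_gt0.
have et : d / t * t = d by rewrite mulfVK // gt_eqF.
have e0 : 0 < d / t by exact: divr_gt0.
set e := d / t in et e0 *.
have : e * t = d by [].
rewrite /t /d; nra.
Qed.

Arguments infeas {R k A a c}.
Arguments eps_exists {R a b mu}.

Theorem corollary2p3 (R : realType) (n m : nat) (A : 'M[R[i]]_n) (B : 'M[R[i]]_m)
  (a b : R) :
  (0 < n)%N -> (0 < m)%N -> psdmx A -> psdmx B ->
  is_min_index A a -> is_min_index B b ->
  is_min_index (A *t B) (a * b).
Proof.
move=> n0 m0 pA pB hA hB.
have [a0 pAa maxA] := hA; have [b0 pBb maxB] := hB.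
split; first exact: mulr_ge0.
  have -> : A *t B - (a * b)%:C%C *: onesmx (n * m) =
      (A - a%:C%C *: onesmx n) *t B + (a%:C%C *: onesmx n) *t (B - b%:C%C *: onesmx m).
    apply/matrixP => i j; rewrite !mxE rmorphM /=; ring.
  apply: psd_add; first exact: psd_tens.
  apply: psd_tens => //; apply: psd_scale; last exact: psd_ones.
  by rewrite ler0c.
move=> mu mu0 pmu; rewrite leNgt; apply/negP => lt.
have [e [e0 he]] := eps_exists a0 b0 lt.
have [x hx] := infeas pA hA (ltr_pwDr e0 (lexx a)).
have [y hy] := infeas pB hB (ltr_pwDr e0 (lexx b)).
have := pmu.2 (x *t y); rewrite -/(qf _ _) qfB -ones_tens !qf_tens subr_ge0.
set aA := qf A x in hx *; set aB := qf B y in hy *.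
set bx := qf (onesmx n) x in hx *; set by_ := qf (onesmx m) y in hy *.
have aA0 : 0 <= aA := pA.2 x.
have aB0 : 0 <= aB := pB.2 y.
have bx0 : 0 <= bx := (psd_ones _ n).2 x.
have by0 : 0 <= by_ := (psd_ones _ m).2 y.
have ca0 : 0 <= (a + e)%:C%C :> R[i] by rewrite ler0c; lra.
have cb0 : 0 <= (b + e)%:C%C :> R[i] by rewrite ler0c; lra.
have bxp : 0 < bx.
  rewrite lt_def bx0 andbT; apply/negP => /eqP bx00.
  by move: hx; rewrite bx00 mulr0 => /(le_lt_trans aA0); rewrite ltxx.
have byp : 0 < by_.
  rewrite lt_def by0 andbT; apply/negP => /eqP by00.
  by move: hy; rewrite by00 mulr0 => /(le_lt_trans aB0); rewrite ltxx.
have h1 : aA * aB < ((a + e)%:C%C * bx) * ((b + e)%:C%C * by_).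
  exact: ltr_pM.
have h2 : ((a + e)%:C%C * bx) * ((b + e)%:C%C * by_) < mu%:C%C * (bx * by_).
  rewrite mulrACA ltr_pM2r ?mulr_gt0 // -rmorphM /= ltcR //.
by move=> h3; have := lt_le_trans (lt_trans h1 h2) h3; rewrite ltxx.
Qed.
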